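(* For every integer $k\ge 1$ we have $I_k\subseteq W_k$.
   Context: Let $K$ be a field and $A$ the free associative (non-unital) $K$-algebra on countably many free generators $x_0,x_1,x_2,\dots$; the monomials $x_{i_1}\cdots x_{i_n}$ ($n\ge1$, $i_j\ge 0$) form a $K$-basis of $A$. Let $A^1$ be $A$ with a unity adjoined. For $n\ge1$ let $A(n)$ be the $K$-span of monomials of length $n$, and let $A(0)=K$ (scalars in $A^1$). Let $D$ be the unique derivation of $A$ with $D(x_i)=x_{i+1}$ for all $i$. For $k\ge1$ let $\mathcal X_k=\{x_0,\dots,x_{k-1}\}$. For $n\ge1$ let $W(k,n,0)$ be the set of monomials $x_{i_1}\cdots x_{i_n}$ of length $n$ with all $x_{i_j}\in\mathcal X_k$, let $W(k,n,l+1)=\{D(w): w\in W(k,n,l)\}$, and $W(k,n)=\bigcup_{t\ge0}W(k,n,t)$. Let $I_k$ be the two-sided ideal of $A$ generated by $W(k,2\cdot 100^{k^2})$, and let $W_k=\sum_{m\ge0}A(m\cdot 100^{k^2})\,W(k,100^{k^2})\,A^1$ (the $K$-linear span of products $u w v$ with $u\in A(m\cdot100^{k^2})$ for some $m\ge0$, $w\in W(k,100^{k^2})$, $v\in A^1$). *)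

(* Defs.v *)
From HB Require Import structures.
From mathcomp Require Import all_boot all_order all_algebra.
Set Implicit Arguments. Unset Strict Implicit. Unset Printing Implicit Defensive.
Import GRing.Theory.
Local Open Scope ring_scope.

(* A monomial x_{i1}...x_{in} of A^1 is the word [:: i1; ...; in] (the empty
   word is the unity of A^1). *)
Definition word := seq nat.

Section FreeAlg.
Variable K : fieldType.

(* Formal finite K-linear combinations of words; an element of A^1 is
   determined by its coefficient function [coef p]. *)
Definition ncp := seq (K * word).

Definition coef (p : ncp) (w : word) : K := \sum_(t <- p | t.2 == w) t.1.

Definition mono (w : word) : ncp := [:: (1, w)].

Definition nmul (p q : ncp) : ncp :=
  [seq (t.1 * s.1, t.2 ++ s.2) | t <- p, s <- q].

(* The derivation D with D(x_i) = x_{i+1}, on a monomial (Leibniz rule). *)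
Definition Dword (w : word) : ncp :=
  [seq (1, set_nth 0%N w i (nth 0%N w i).+1) | i <- iota 0 (size w)].

Definition Dp (p : ncp) : ncp :=
  flatten [seq [seq (t.1 * s.1, s.2) | s <- Dword t.2] | t <- p].

Definition inW (k n : nat) (p : ncp) : Prop :=
  exists (w : word) (t : nat),
    size w = n /\ all (fun i => i < k)%N w /\ p = iter t Dp (mono w).

Definition in_span (G : ncp -> Prop) (f : word -> K) : Prop :=
  exists l : seq (K * ncp),
    (forall cg, cg \in l -> G cg.2) /\
    f = (fun w => \sum_(cg <- l) cg.1 * coef cg.2 w).

(* Spanning set of the two-sided ideal I_k generated by W(k, 2*100^(k^2)):
   u w v with u, v monomials of A^1 and w in W(k, 2*100^(k^2)). *)
Definition Igen (k : nat) (p : ncp) : Prop :=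
  exists (u v : word) (w : ncp),
    inW k (2 * 100 ^ (k ^ 2))%N w /\ p = nmul (nmul (mono u) w) (mono v).

Definition I_ (k : nat) (f : word -> K) : Prop := in_span (Igen k) f.

(* Spanning set of W_k: u w v with u a monomial of length m*100^(k^2) (m>=0,
   m = 0 giving scalars), w in W(k,100^(k^2)), v a monomial of A^1. *)
Definition Wgen (k : nat) (p : ncp) : Prop :=
  exists (u v : word) (w : ncp),
    (exists m : nat, size u = m * 100 ^ (k ^ 2))%N /\
    inW k (100 ^ (k ^ 2))%N w /\ p = nmul (nmul (mono u) w) (mono v).

Definition W_ (k : nat) (f : word -> K) : Prop := in_span (Wgen k) f.

End FreeAlg.

(* Main.v *)
Require Import Defs.
From mathcomp Require Import all_boot all_order all_algebra.
From Stdlib Require Import FunctionalExtensionality.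
Set Implicit Arguments. Unset Strict Implicit. Unset Printing Implicit Defensive.
Import GRing.Theory.
Local Open Scope ring_scope.

Section Proof.
Variable K : fieldType.

Definition lin (g : word -> K) (p : ncp K) : K := \sum_(t <- p) t.1 * g t.2.
Definition equiv (p q : ncp K) := forall g, lin g p = lin g q.
Definition scale (c : K) (p : ncp K) : ncp K := [seq (c * t.1, t.2) | t <- p].

Lemma lin_ext g g' p : g =1 g' -> lin g p = lin g' p.
Proof. by move=> e; apply: eq_bigr => t _; rewrite e. Qed.
Lemma lin_cat g p q : lin g (p ++ q) = lin g p + lin g q.
Proof. by rewrite /lin big_cat. Qed.
Lemma lin_scale g c p : lin g (scale c p) = c * lin g p.
Proof. rewrite /lin big_map mulr_sumr; apply: eq_bigr => t _ /=; by rewrite mulrA. Qed.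
Lemma lin_mono g w : lin g (mono K w) = g w.
Proof. by rewrite /lin /mono big_seq1 mul1r. Qed.
Lemma lin_flatten (T : Type) g (F : T -> ncp K) l :
  lin g (flatten (map F l)) = \sum_(x <- l) lin g (F x).
Proof. by rewrite /lin big_flatten big_map. Qed.
Lemma lin_add f f' p : lin (fun w => f w + f' w) p = lin f p + lin f' p.
Proof. rewrite /lin -big_split; apply: eq_bigr => t _; by rewrite mulrDr. Qed.

Lemma lin_swap (h : word -> word -> K) p q :
  lin (fun x => lin (fun y => h x y) q) p = lin (fun y => lin (fun x => h x y) p) q.
Proof.
rewrite /lin.
under eq_bigr => t _ do rewrite mulr_sumr.
rewrite exchange_big /=. apply: eq_bigr => s _. rewrite mulr_sumr. apply: eq_bigr => t _.
by rewrite mulrCA.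
Qed.

Lemma lin_nmul g p q : lin g (nmul p q) = lin (fun a => lin (fun b => g (a ++ b)) q) p.
Proof.
rewrite /lin /nmul big_flatten big_map. apply: eq_bigr => t _.
rewrite big_map mulr_sumr; apply: eq_bigr => s _ /=; by rewrite mulrA.
Qed.

Lemma lin_Dp g p : lin g (Dp p) = lin (fun w => lin g (Dword K w)) p.
Proof.
rewrite /lin /Dp big_flatten big_map; apply: eq_bigr => t _.
rewrite big_map mulr_sumr; apply: eq_bigr => s _ /=; by rewrite mulrA.
Qed.

Lemma lin_Dword_cons g a w :
  lin g (Dword K (a :: w)) = g (a.+1 :: w) + lin (fun w' => g (a :: w')) (Dword K w).
Proof.
rewrite /Dword /= /lin big_cons /= mul1r; congr (_ + _).
rewrite -[1%N]/(1 + 0)%N iotaDl big_map !big_map; apply: eq_bigr => i _ /=.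
by rewrite add0n.
Qed.


Lemma lin_Dword_cat g x y :
  lin g (Dword K (x ++ y)) = lin (fun w => g (w ++ y)) (Dword K x) + lin (fun w => g (x ++ w)) (Dword K y).
Proof.
elim: x g => [|a x IH] g /=.
  by rewrite /Dword /= /lin big_nil add0r.
by rewrite !lin_Dword_cons IH addrA.
Qed.

Lemma Dp_nmul p q : equiv (Dp (nmul p q)) (nmul (Dp p) q ++ nmul p (Dp q)).
Proof.
move=> g; rewrite lin_cat lin_Dp lin_nmul.
have -> : lin g (nmul (Dp p) q) = lin (fun a => lin (fun w => lin (fun b => g (w ++ b)) q) (Dword K a)) p.
  by rewrite lin_nmul lin_Dp.
have -> : lin g (nmul p (Dp q)) = lin (fun a => lin (fun b => lin (fun w => g (a ++ w)) (Dword K b)) q) p.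
  by rewrite lin_nmul; apply: lin_ext => a; rewrite lin_Dp.
rewrite -lin_add; apply: lin_ext => a /=.
rewrite -lin_swap -lin_add; apply: lin_ext => b /=.
by rewrite lin_Dword_cat.
Qed.

Lemma equiv_refl p : equiv p p. Proof. by []. Qed.
Lemma equiv_sym p q : equiv p q -> equiv q p. Proof. by move=> e g. Qed.
Lemma equiv_trans p q r : equiv p q -> equiv q r -> equiv p r.
Proof. by move=> e1 e2 g; rewrite e1 e2. Qed.
Lemma equiv_Dp p q : equiv p q -> equiv (Dp p) (Dp q).
Proof. by move=> e g; rewrite !lin_Dp e. Qed.
Lemma equiv_iter t p q : equiv p q -> equiv (iter t (@Dp K) p) (iter t (@Dp K) q).
Proof. by elim: t => [//|t IH] e /=; apply: equiv_Dp; apply: IH. Qed.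
Lemma equiv_nmul p p' q q' : equiv p p' -> equiv q q' -> equiv (nmul p q) (nmul p' q').
Proof. move=> e1 e2 g; rewrite !lin_nmul e1; apply: lin_ext => a; apply: e2. Qed.

Definition comb (P Q : ncp K) (l : seq (K * nat * nat)) : ncp K :=
  flatten [seq scale x.1.1 (nmul (iter x.1.2 (@Dp K) P) (iter x.2 (@Dp K) Q)) | x <- l].

Lemma leibniz_iter t P Q : exists l, equiv (iter t (@Dp K) (nmul P Q)) (comb P Q l).
Proof.
elim: t => [|t [l IH]].
  exists [:: (1, 0%N, 0%N)] => g.
  by rewrite /comb lin_flatten big_seq1 lin_scale mul1r.
exists (flatten [seq [:: (x.1.1, x.1.2.+1, x.2); (x.1.1, x.1.2, x.2.+1)] | x <- l]) => g.
rewrite /= lin_Dp IH /comb !lin_flatten big_flatten big_map /=.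
apply: eq_bigr => x _.
rewrite big_cons big_seq1 !lin_scale -mulrDr -!lin_cat; congr (_ * _).
by rewrite -lin_Dp Dp_nmul.
Qed.

Lemma iter_letter i a : equiv (iter i (@Dp K) (mono K [:: a])) (mono K [:: (a + i)%N]).
Proof.
elim: i => [|i IH] g /=; first by rewrite addn0.
by rewrite lin_Dp IH !lin_mono /Dword /= /lin addnS.
Qed.

Lemma mono_cat x y : equiv (mono K (x ++ y)) (nmul (mono K x) (mono K y)).
Proof. by move=> g; rewrite lin_nmul !lin_mono. Qed.

Definition M (u : word) (X : ncp K) (v : word) := nmul (nmul (mono K u) X) (mono K v).

Lemma lin_M g u X v : lin g (M u X v) = lin (fun b => g (u ++ b ++ v)) X.
Proof.
rewrite /M lin_nmul.
rewrite (lin_ext (g' := fun a => g (a ++ v))); last by move=> a; rewrite lin_mono.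
by rewrite lin_nmul lin_mono; apply: lin_ext => b; rewrite catA.
Qed.

Lemma equiv_M u v X Y : equiv X Y -> equiv (M u X v) (M u Y v).
Proof. by move=> e g; rewrite !lin_M. Qed.

Lemma M_flat (T : Type) u v (c : T -> K) (F : T -> ncp K) l :
  equiv (M u (flatten [seq scale (c x) (F x) | x <- l]) v)
        (flatten [seq scale (c x) (M u (F x) v) | x <- l]).
Proof.
move=> g; rewrite lin_M !lin_flatten; apply: eq_bigr => x _.
by rewrite !lin_scale lin_M.
Qed.

Lemma M_right u v P Q :
  equiv (M u (nmul P Q) v) (flatten [seq scale b.1 (M u P (b.2 ++ v)) | b <- Q]).
Proof.
move=> g; rewrite lin_M lin_nmul lin_swap lin_flatten {1}/lin; apply: eq_bigr => b _.
rewrite lin_scale lin_M; congr (_ * _); apply: lin_ext => a.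
by rewrite -!catA.
Qed.

Lemma M_left u v a Q : equiv (M u (nmul (mono K [:: a]) Q) v) (M (u ++ [:: a]) Q v).
Proof.
move=> g; rewrite !lin_M lin_nmul lin_mono; apply: lin_ext => b.
by rewrite -!catA.
Qed.

Variable k : nat.
Let N := (100 ^ (k ^ 2))%N.

Definition Wp (p : ncp K) := W_ k (coef p).

Lemma coef_lin p w : coef p w = lin (fun w' => (w' == w)%:R) p.
Proof.
rewrite /coef /lin big_mkcond /=; apply: eq_bigr => t _.
by case: (t.2 == w); rewrite ?mulr1 ?mulr0.
Qed.

Lemma Wp_equiv p q : equiv p q -> Wp p -> Wp q.
Proof.
move=> e; rewrite /Wp.
have -> : coef q = coef p by apply: functional_extensionality => w; rewrite !coef_lin e.
done.
Qed.

Lemma W_add (f f' : word -> K) : W_ k f -> W_ k f' -> W_ k (fun w => f w + f' w).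
Proof.
move=> [l1 [H1 ->]] [l2 [H2 ->]]; exists (l1 ++ l2); split.
  by move=> cg; rewrite mem_cat => /orP [] ?; [apply: H1|apply: H2].
by apply: functional_extensionality => w; rewrite big_cat.
Qed.

Lemma W_scalef c (f : word -> K) : W_ k f -> W_ k (fun w => c * f w).
Proof.
move=> [l [H ->]]; exists [seq (c * cg.1, cg.2) | cg <- l]; split.
  by move=> cg /mapP [x hx ->] /=; exact: (H x hx).
apply: functional_extensionality => w; rewrite big_map mulr_sumr.
by apply: eq_bigr => x _; rewrite mulrA.
Qed.

Lemma W_zero : W_ k (fun _ => 0 : K).
Proof.
exists [::]; split => //.
by apply: functional_extensionality => w; rewrite big_nil.
Qed.

Lemma Wp_cat p q : Wp p -> Wp q -> Wp (p ++ q).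
Proof.
move=> h1 h2; rewrite /Wp.
have -> : coef (p ++ q) = (fun w => coef p w + coef q w).
  by apply: functional_extensionality => w; rewrite /coef big_cat.
exact: W_add.
Qed.

Lemma Wp_scale c p : Wp p -> Wp (scale c p).
Proof.
move=> h; rewrite /Wp.
have -> : coef (scale c p) = (fun w => c * coef p w).
  by apply: functional_extensionality => w; rewrite !coef_lin lin_scale.
exact: W_scalef.
Qed.

Lemma Wp_flat (T : Type) (F : T -> ncp K) l : (forall x, Wp (F x)) -> Wp (flatten (map F l)).
Proof.
move=> h; elim: l => [|x l IH] /=.
  rewrite /Wp; have -> : coef (@nil (K * word)) = (fun _ => 0).
    by apply: functional_extensionality => w; rewrite /coef big_nil.
  exact: W_zero.
exact: Wp_cat.
Qed.

Lemma Wp_base u y i v : all (fun j => j < k)%N y -> size y = N -> (N %| size u)%N ->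
  Wp (M u (iter i (@Dp K) (mono K y)) v).
Proof.
move=> hy sy hu; exists [:: (1, M u (iter i (@Dp K) (mono K y)) v)]; split.
  move=> cg; rewrite inE => /eqP -> /=.
  exists u, v, (iter i (@Dp K) (mono K y)); split; first by exists (size u %/ N)%N; rewrite divnK.
  by split => //; exists y, i.
by apply: functional_extensionality => w; rewrite big_seq1 mul1r.
Qed.

Lemma Wp_comb u v P Q l :
  (forall i j, Wp (M u (nmul (iter i (@Dp K) P) (iter j (@Dp K) Q)) v)) -> Wp (M u (comb P Q l) v).
Proof.
move=> h; apply: (Wp_equiv (equiv_sym (M_flat _ _ _ _ _))).
by apply: Wp_flat => x; apply: Wp_scale.
Qed.

Lemma lemA s : all (fun i => i < k)%N s -> (N <= size s)%N ->
  forall u t v, (N %| size u)%N -> Wp (M u (iter t (@Dp K) (mono K s)) v).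
Proof.
move=> hs hN u t v hu.
have e1 : equiv (mono K s) (nmul (mono K (take N s)) (mono K (drop N s))).
  by rewrite -{1}(cat_take_drop N s); apply: mono_cat.
have [l el] := leibniz_iter t (mono K (take N s)) (mono K (drop N s)).
apply: (Wp_equiv (equiv_M u v (equiv_sym (equiv_trans (equiv_iter t e1) el)))).
apply: Wp_comb => i j.
apply: (Wp_equiv (equiv_sym (M_right _ _ _ _))).
apply: Wp_flat => b; apply: Wp_scale; apply: Wp_base => //.
  by move: hs; rewrite -{1}(cat_take_drop N s) all_cat => /andP [].
by rewrite size_takel.
Qed.

Lemma lemB d : forall u s t v, (N %| size u + d)%N -> all (fun i => i < k)%N s ->
  (N + d <= size s)%N -> Wp (M u (iter t (@Dp K) (mono K s)) v).
Proof.
elim: d => [|d IH] u s t v hu hs hN.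
  by apply: lemA => //; rewrite ?addn0 in hu hN.
case: s hs hN => [|a s'] hs hN; first by rewrite addnS ltn0 in hN.
move: hs => /= /andP [_ hs'].
have e1 : equiv (mono K (a :: s')) (nmul (mono K [:: a]) (mono K s')) by apply: (mono_cat [:: a] s').
have [l el] := leibniz_iter t (mono K [:: a]) (mono K s').
apply: (Wp_equiv (equiv_M u v (equiv_sym (equiv_trans (equiv_iter t e1) el)))).
apply: Wp_comb => i j.
apply: (Wp_equiv (equiv_sym (equiv_M u v (equiv_nmul (iter_letter i a) (equiv_refl _))))).
apply: (Wp_equiv (equiv_sym (M_left _ _ _ _))).
apply: IH => //.
  by rewrite size_cat /= addn1 addSnnS.
by rewrite addnS ltnS in hN.
Qed.

End Proof.

Theorem mainTheorem2 (K : fieldType) (k : nat) :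
  (1 <= k)%N -> forall f : word -> K, I_ k f -> W_ k f.
Proof.
move=> _ f [l [Hl ->]].
elim: l Hl => [|cg l IH] Hl.
  have -> : (fun w : word => \sum_(cg <- [::]) cg.1 * coef cg.2 w) = (fun _ => 0 : K).
    by apply: functional_extensionality => w; rewrite big_nil.
  exact: W_zero.
have -> : (fun w : word => \sum_(cg0 <- cg :: l) cg0.1 * coef cg0.2 w) =
  (fun w => cg.1 * coef cg.2 w + \sum_(cg0 <- l) cg0.1 * coef cg0.2 w).
  by apply: functional_extensionality => w; rewrite big_cons.
apply: W_add; last by apply: IH => x hx; apply: Hl; rewrite inE hx orbT.
apply: W_scalef.
have [u [v [w [[s [t [ss [hs ->]]]] ->]]]] := Hl cg (mem_head _ _).
set N := (100 ^ (k ^ 2))%N.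
have N0 : (0 < N)%N by rewrite expn_gt0.
apply: (@lemB K k (N - size u %% N)) => //.
  rewrite {1}(divn_eq (size u) N) -addnA subnKC; last by apply: ltnW; rewrite ltn_pmod.
  by rewrite dvdn_add // dvdn_mull.
by rewrite ss mul2n -addnn leq_add2l leq_subr.
Qed.
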